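(* If $n>k\ge 3$, then $\mathrm{isat}(n,\mathcal{A}_{k+1})\ge 3n-1$.
   Context: $\mathcal{B}_n$ denotes the Boolean lattice $(2^{[n]},\subseteq)$. A family $\mathcal{F}\subseteq 2^{[n]}$ (ordered by inclusion) is induced-$\mathcal{P}$-saturated if it contains no induced copy of $\mathcal{P}$ (an injection $f$ with $u\le v\iff f(u)\subseteq f(v)$) but every family $\mathcal{F}'$ with $\mathcal{F}\subsetneq\mathcal{F}'\subseteq 2^{[n]}$ contains one. $\mathrm{isat}(n,\mathcal{P})$ is the minimum size of such a family. $\mathcal{A}_{m}$ is the $m$-element antichain. *)

(* Defs.v *)
From mathcomp Require Import all_boot.
Set Implicit Arguments. Unset Strict Implicit. Unset Printing Implicit Defensive.

(* A finite poset P is given by its carrier finType and its order relation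
   le : rel P (assumed to be a partial order by the user; for the antichain
   it is equality).  The Boolean lattice B_n is {set 'I_n} ordered by \subset. *)

Definition has_induced_copy (n : nat) (P : finType) (le : rel P)
    (F : {set {set 'I_n}}) : Prop :=
  exists f : P -> {set 'I_n},
    injective f /\ (forall u, f u \in F) /\
    (forall u v, le u v = (f u \subset f v)).

Definition induced_saturated (n : nat) (P : finType) (le : rel P)
    (F : {set {set 'I_n}}) : Prop :=
  ~ has_induced_copy le F /\
  (forall F' : {set {set 'I_n}}, F \proper F' -> has_induced_copy le F').

Definition antichain_le (m : nat) : rel 'I_m := fun u v => u == v.

(* isat(n,P) >= b  iff every induced-P-saturated family has size >= b
   (isat is the minimum size of such a family). *)
Definition isat_ge (n : nat) (P : finType) (le : rel P) (b : nat) : Prop :=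
  forall F : {set {set 'I_n}}, induced_saturated le F -> b <= #|F|.

(* Main.v *)
Require Import Defs.
From mathcomp Require Import all_boot zify.
Set Implicit Arguments. Unset Strict Implicit. Unset Printing Implicit Defensive.

Definition cmp n (X Y : {set 'I_n}) := (X \subset Y) || (Y \subset X).
Definition antichain n (A : {set {set 'I_n}}) :=
  forall X Y, X \in A -> Y \in A -> X \subset Y -> X = Y.
Definition antichainb n (A : {set {set 'I_n}}) :=
  [forall X in A, forall Y in A, (X \subset Y) ==> (X == Y)].

Lemma antichainP n (A : {set {set 'I_n}}) : reflect (antichain A) (antichainb A).
Proof.
apply: (iffP forall_inP) => [H X Y hX hY hXY | H X hX].
  by move/forall_inP: (H X hX) => /(_ Y hY) /implyP /(_ hXY) /eqP.
by apply/forall_inP => Y hY; apply/implyP => hXY; apply/eqP; apply: H.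
Qed.

Lemma sub_card_sub n (X Y : {set 'I_n}) : cmp X Y -> #|X| <= #|Y| -> X \subset Y.
Proof.
case/orP => // hYX hc.
have : Y == X by rewrite eqEcard hYX hc.
by move/eqP->.
Qed.

Lemma antichain_sub n (A B : {set {set 'I_n}}) : A \subset B -> antichain B -> antichain A.
Proof. by move=> /subsetP hAB hB X Y hX hY; apply: hB; apply: hAB. Qed.

Lemma color_hit n (A : {set {set 'I_n}}) (g : {set 'I_n} -> nat) m c :
  antichain A -> #|A| = m -> (forall X, X \in A -> g X < m) ->
  (forall X Y, X \in A -> Y \in A -> g X = g Y -> cmp X Y) ->
  c < m -> exists2 z, z \in A & g z = c.
Proof.
move=> hA hcard hlt hcmp hc.
case: (boolP [exists z in A, g z == c]) => [/exists_inP [z hz /eqP]|hno]; first by exists z.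
have hu : uniq (map g (enum A)).
  rewrite map_inj_in_uniq ?enum_uniq // => X Y; rewrite !mem_enum => hX hY hg.
  case/orP: (hcmp X Y hX hY hg) => h; first exact: hA.
  by apply/esym; apply: hA.
have hs : {subset map g (enum A) <= [seq i <- iota 0 m | i != c]}.
  move=> i /mapP [X]; rewrite mem_enum => hX ->.
  rewrite mem_filter mem_iota /= add0n hlt // andbT.
  by apply: contra hno => /eqP h; apply/exists_inP; exists X => //; apply/eqP.
have := uniq_leq_size hu hs.
rewrite size_map -cardE hcard size_filter.
have -> : count (fun i => i != c) (iota 0 m) = m - count_mem c (iota 0 m).
  have := count_predC (pred1 c) (iota 0 m); rewrite size_iota.
  have -> : count (predC (pred1 c)) (iota 0 m) = count (fun i => i != c) (iota 0 m) by [].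
  lia.
rewrite count_uniq_mem ?iota_uniq // mem_iota /= add0n hc; lia.
Qed.

Lemma cmp_refl n (X : {set 'I_n}) : cmp X X.
Proof. by rewrite /cmp subxx. Qed.
Lemma cmp_sym n (X Y : {set 'I_n}) : cmp X Y = cmp Y X.
Proof. by rewrite /cmp orbC. Qed.

Lemma dilworth n N : forall (P : {set {set 'I_n}}), #|P| <= N -> forall m : nat,
  (forall A : {set {set 'I_n}}, A \subset P -> antichain A -> #|A| <= m) ->
  exists g : {set 'I_n} -> nat, (forall X, X \in P -> g X < m) /\
    (forall X Y, X \in P -> Y \in P -> g X = g Y -> cmp X Y).
Proof.
elim: N => [|N IH] P hP m hw.
  have P0 : P = set0 by apply/eqP; rewrite -cards_eq0; lia.
  by exists (fun _ => 0); split => X; rewrite P0 inE.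
case: (set_0Vmem P) => [P0|[a0 ha0]].
  by exists (fun _ => 0); split => X; rewrite P0 inE.
set a := [arg max_(X > a0 in P) #|X|].
have [ha amax] : a \in P /\ forall X, X \in P -> #|X| <= #|a|.
  by rewrite /a; case: arg_maxnP => // x hx hmax; split=> // X hX; apply: hmax.
have amaxs : forall X, X \in P -> a \subset X -> X = a.
  by move=> X hX haX; apply/eqP; rewrite eq_sym eqEcard haX amax.
set P' := P :\ a.
have inP' : forall X, X \in P -> X != a -> X \in P' by move=> X hX hXa; rewrite !inE hXa hX.
have P'P : P' \subset P by apply: subsetDl.
have hP' : #|P'| <= N by have := cardsD1 a P; rewrite ha add1n -/P'; lia.
have hm : 1 <= m.
  have := hw [set a]; rewrite cards1; apply; first by rewrite sub1set.
  by move=> X Y; rewrite !inE => /eqP -> /eqP ->.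
have hw' : forall A : {set {set 'I_n}}, A \subset P' -> antichain A -> #|A| <= m.
  by move=> A hA; apply: hw; apply: subset_trans hA P'P.
case: (boolP [exists A : {set {set 'I_n}}, [&& A \subset P', antichainb A & m <= #|A|]])
  => [/existsP [A0 /and3P [hA0 /antichainP hA0a hA0c]] | hno]; last first.
  have hw1 : forall A : {set {set 'I_n}}, A \subset P' -> antichain A -> #|A| <= m.-1.
    move=> A hA hAa; have : ~~ (m <= #|A|).
      apply: contra hno => h; apply/existsP; exists A; rewrite hA h andbT.
      by apply/antichainP.
    lia.
  have [g' [hg1 hg2]] := IH P' hP' m.-1 hw1.
  exists (fun X => if X == a then m.-1 else g' X); split.
    move=> X hX; case: eqP => [_|/eqP hXa]; first lia.
    by have := hg1 X (inP' X hX hXa); lia.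
  move=> X Y hX hY; case: eqP => [->|/eqP hXa]; case: eqP => [->|/eqP hYa] //.
  - by rewrite cmp_refl.
  - by move=> h; have := hg1 Y (inP' Y hY hYa); lia.
  - by move=> h; have := hg1 X (inP' X hX hXa); lia.
  - by apply: hg2; apply: inP'.
have [g [hg1 hg2]] := IH P' hP' m hw'.
have hA0m : #|A0| = m by have := hw' A0 hA0 hA0a; lia.
have hit : forall A : {set {set 'I_n}}, A \subset P' -> antichain A -> #|A| = m ->
    forall c, c < m -> exists2 z, z \in A & g z = c.
  move=> A hA hAa hAm c hc; apply: (color_hit hAa hAm) => //.
    by move=> X hX; apply: hg1; apply: (subsetP hA).
  by move=> X Y hX hY; apply: hg2; apply: (subsetP hA).
pose inA z := [exists A : {set {set 'I_n}},
   [&& A \subset P', antichainb A, #|A| == m & z \in A]].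
pose Z c := [set z in P' | (g z == c) && inA z].
have inZ : forall c z, z \in Z c -> [/\ z \in P', g z = c & inA z].
  by move=> c z; rewrite inE => /andP [hz /andP [/eqP hc hi]].
have mkZ : forall (c : nat) z (A : {set {set 'I_n}}), A \subset P' -> antichain A -> #|A| = m -> z \in A -> g z = c ->
    z \in Z c.
  move=> c z A hA hAa hAm hzA hgz; rewrite inE (subsetP hA _ hzA) hgz eqxx /=.
  apply/existsP; exists A; rewrite hA hAm eqxx hzA !andbT /=; exact/antichainP.
pose x c := odflt set0 [pick z in Z c | [forall y in Z c, #|y| <= #|z|]].
have xspec : forall c, c < m -> x c \in Z c /\ forall y, y \in Z c -> y \subset x c.
  move=> c hc; have [z0 hz0A hz0c] := hit A0 hA0 hA0a hA0m c hc.
  have hz0 := mkZ c z0 A0 hA0 hA0a hA0m hz0A hz0c.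
  rewrite /x; case: pickP => [z /andP [hz /forall_inP hmax] | hnone].
    split=> // y hy; have [hyP hyc _] := inZ _ _ hy; have [hzP hzc _] := inZ _ _ hz.
    apply: sub_card_sub; last exact: hmax.
    by apply: hg2 => //; rewrite hyc hzc.
  exfalso; case: (@arg_maxnP _ z0 (mem (Z c)) (fun z => #|z|) hz0) => z hz hmax.
  have hz' : z \in Z c by exact: hz.
  have := hnone z; rewrite hz' /= => /negbT /negP; apply.
  by apply/forall_inP => y hy; exact: hmax y hy.
have xinj : forall c d, c < m -> d < m -> x c \subset x d -> c = d.
  move=> c d hc hd hsub; have [hxd _] := xspec d hd.
  have [hxdP' hgd hinA] := inZ _ _ hxd.
  move/existsP: hinA => [A /and4P [hA /antichainP hAa /eqP hAm hxA]].
  have [y hyA hyc] := hit A hA hAa hAm c hc.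
  have hyZ := mkZ c y A hA hAa hAm hyA hyc.
  have hyx := (xspec c hc).2 y hyZ.
  have hyeq : y = x d := hAa y (x d) hyA hxA (subset_trans hyx hsub).
  by rewrite -hyc hyeq hgd.
have xP' : forall c, c < m -> x c \in P' by move=> c hc; have [/inZ[]] := xspec c hc.
case: (boolP [exists c : 'I_m, x c \subset a]) => [/existsP [c hca] | hno2]; last first.
  exfalso.
  pose Xs := [set x (nat_of_ord c) | c : 'I_m].
  have hXs : #|Xs| = m.
    rewrite card_imset ?card_ord // => c d hcd; apply: val_inj.
    by apply: xinj; rewrite ?ltn_ord // hcd subxx.
  have haXs : a \notin Xs.
    apply/imsetP => [[c _ hc]]; have := xP' c (ltn_ord c).
    by rewrite -hc !inE eqxx.
  have := hw (a |: Xs).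
  have -> : #|a |: Xs| = m.+1 by rewrite cardsU1 haXs hXs.
  have -> : a |: Xs \subset P.
    apply/subsetP => X; rewrite !inE => /orP [/eqP -> //|/imsetP [c _ ->]].
    by apply: (subsetP P'P); apply: xP'.
  move=> /(_ isT) H; have : m.+1 <= m; last by lia.
  apply: H => X Y; rewrite !inE => /orP [/eqP ->|/imsetP [c _ ->]] /orP [/eqP ->|/imsetP [d _ ->]] hsub //.
  - by symmetry; apply: amaxs => //; apply: (subsetP P'P); apply: xP'.
  - by case/negP: hno2; apply/existsP; exists c.
  - by have := xinj c d (ltn_ord c) (ltn_ord d) hsub => ->.
pose K := a |: [set z in P' | (g z == c) && (z \subset x c)].
pose P'' := P :\: K.
have haK : a \in K by rewrite !inE eqxx.
have P''P' : P'' \subset P'.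
  apply/subsetP => X; rewrite !inE => /andP [hXK hX]; rewrite hX andbT.
  by apply: contra hXK => /eqP ->; rewrite eqxx.
have hP'' : #|P''| <= N by have := subset_leq_card P''P'; lia.
have hw'' : forall A : {set {set 'I_n}}, A \subset P'' -> antichain A -> #|A| <= m.-1.
  move=> A hA hAa; rewrite leqNgt; apply/negP => hlt.
  have hAP' := subset_trans hA P''P'.
  have hAm : #|A| = m by have := hw' A hAP' hAa; lia.
  have [y hyA hyc] := hit A hAP' hAa hAm c (ltn_ord c).
  have hyZ := mkZ c y A hAP' hAa hAm hyA hyc.
  have hyx := (xspec c (ltn_ord c)).2 y hyZ.
  have hyP' := subsetP hAP' y hyA; move: hyP'; rewrite inE => /andP [hya hyP].
  have := subsetP hA y hyA; rewrite !inE => /andP [/negP hn _]; apply: hn.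
  apply/orP; right; apply/and3P; split; [by rewrite hyP andbT; move: hya; rewrite inE | by rewrite hyc | exact: hyx].
have [g'' [hg1'' hg2'']] := IH P'' hP'' m.-1 hw''.
have Kchain : forall X Y, X \in K -> Y \in K -> cmp X Y.
  have sub : forall z, z \in K -> z != a -> [/\ z \in P', g z = c & z \subset x c].
    by move=> z; rewrite !inE => /orP [/eqP ->|]; [rewrite eqxx | case/andP => -> /andP [/eqP -> ->]].
  have za : forall z, z \in K -> z \subset a.
    move=> z hz; case: (eqVneq z a) => [->//|hza].
    by have [_ _ h] := sub z hz hza; apply: subset_trans h hca.
  move=> X Y hX hY.
  case: (eqVneq X a) => [->|hXa]; first by rewrite /cmp za ?orbT.
  case: (eqVneq Y a) => [->|hYa]; first by rewrite /cmp za.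
  have [h1 h2 _] := sub X hX hXa; have [h3 h4 _] := sub Y hY hYa.
  by apply: hg2 => //; rewrite h2 h4.
have inP'' : forall X, X \in P -> X \notin K -> X \in P'' by move=> X hX hXK; rewrite inE hXK hX.
exists (fun X => if X \in K then m.-1 else g'' X); split.
  move=> X hX; case: ifP => hXK; first lia.
  by have := hg1'' X (inP'' X hX (negbT hXK)); lia.
move=> X Y hX hY; case: ifP => hXK; case: ifP => hYK.
- by move=> _; apply: Kchain.
- by move=> h; have := hg1'' Y (inP'' Y hY (negbT hYK)); rewrite -h ltnn.
- by move=> h; have := hg1'' X (inP'' X hX (negbT hXK)); rewrite h ltnn.
- by apply: hg2''; apply: inP''; rewrite ?hXK ?hYK.
Qed.

Definition chain n (C : {set {set 'I_n}}) := forall X Y, X \in C -> Y \in C -> cmp X Y.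
Definition chainb n (C : {set {set 'I_n}}) := [forall X in C, forall Y in C, cmp X Y].
Lemma chainP n (C : {set {set 'I_n}}) : reflect (chain C) (chainb C).
Proof.
apply: (iffP forall_inP) => [H X Y hX hY | H X hX].
  by move/forall_inP: (H X hX) => /(_ Y hY).
by apply/forall_inP => Y hY; apply: H.
Qed.

Lemma copy_of_antichain n k (F A : {set {set 'I_n}}) :
  A \subset F -> antichain A -> k.+1 <= #|A| -> has_induced_copy (@antichain_le k.+1) F.
Proof.
move=> hAF hA hc.
have hs : forall i : 'I_k.+1, i < size (enum A) by move=> i; rewrite -cardE; have := ltn_ord i; lia.
exists (fun i : 'I_k.+1 => nth set0 (enum A) i); split; [|split].
- move=> i j /eqP; rewrite nth_uniq ?enum_uniq ?hs // => /eqP h; exact: val_inj.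
- by move=> u; apply: (subsetP hAF); rewrite -mem_enum; apply: mem_nth.
- move=> u v; rewrite /antichain_le; case: (eqVneq u v) => [->|huv]; first by rewrite subxx.
  symmetry; apply/negP => hsub.
  have mu := mem_nth set0 (hs u); have mv := mem_nth set0 (hs v).
  rewrite mem_enum in mu; rewrite mem_enum in mv.
  have := hA _ _ mu mv hsub; move=> /eqP; rewrite nth_uniq ?enum_uniq ?hs // => /eqP h.
  by move/eqP: huv; apply; apply: val_inj.
Qed.

Lemma antichain_of_copy n k (F : {set {set 'I_n}}) :
  has_induced_copy (@antichain_le k.+1) F ->
  exists B : {set {set 'I_n}}, [/\ B \subset F, antichain B & #|B| = k.+1].
Proof.
move=> [f [finj [fin fle]]]; exists (f @: setT); split.
- by apply/subsetP => X /imsetP [u _ ->].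
- move=> X Y /imsetP [u _ ->] /imsetP [v _ ->]; rewrite -fle /antichain_le.
  by move/eqP ->.
- by rewrite card_imset // cardsT card_ord.
Qed.

Lemma sat_width n k (F : {set {set 'I_n}}) :
  ~ has_induced_copy (@antichain_le k.+1) F ->
  forall A : {set {set 'I_n}}, A \subset F -> antichain A -> #|A| <= k.
Proof.
move=> hnc A hAF hA; rewrite leqNgt; apply/negP => hlt; apply: hnc.
exact: copy_of_antichain hAF hA hlt.
Qed.

Lemma sat_ext n k (F : {set {set 'I_n}}) S :
  induced_saturated (@antichain_le k.+1) F -> S \notin F ->
  exists B : {set {set 'I_n}}, [/\ B \subset S |: F, antichain B & #|B| = k.+1].
Proof.
move=> [_ hext] hS; apply: antichain_of_copy; apply: hext.
rewrite properEneq subsetU1 andbT; apply/eqP => h.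
by move: hS; rewrite h setU11.
Qed.

Lemma cover_bound n k (M : 'I_k -> {set {set 'I_n}}) (i0 : 'I_k) (J : {set 'I_k})
  (B : {set {set 'I_n}}) :
  (forall j, chain (M j)) -> antichain B ->
  (forall Z, Z \in B -> exists2 j, j \in J & Z \in M j) -> #|B| <= #|J|.
Proof.
move=> hM hB hcov.
pose h Z := odflt i0 [pick j in J | Z \in M j].
have hh : forall Z, Z \in B -> h Z \in J /\ Z \in M (h Z).
  move=> Z hZ; rewrite /h; case: pickP => [j /andP [hj hZj] //| hn].
  have [j hj hZj] := hcov Z hZ; have := hn j; rewrite hj hZj //.
rewrite -(card_in_imset (f := h) (D := B)).
  apply: subset_leq_card; apply/subsetP => j /imsetP [Z hZ ->]; exact: (hh Z hZ).1.
move=> Z1 Z2 h1 h2 heq; have [_ m1] := hh Z1 h1; have [_ m2] := hh Z2 h2.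
rewrite heq in m1; case/orP: (hM _ _ _ m1 m2) => hs; first exact: hB.
by symmetry; apply: hB.
Qed.

Lemma ph n k (M : 'I_k -> {set {set 'I_n}}) (F B : {set {set 'I_n}}) (i : 'I_k) S :
  (forall j, chain (M j)) -> F \subset \bigcup_j M j ->
  (forall Z, Z \in M i -> ~~ cmp Z S -> exists2 j, j != i & Z \in M j) ->
  B \subset S |: F -> antichain B -> #|B| <= k.
Proof.
move=> hM hcov hsh hBF hB.
have inF : forall Z, Z \in B -> Z != S -> Z \in F.
  by move=> Z hZ hZS; move: (subsetP hBF Z hZ); rewrite in_setU1 (negbTE hZS).
have inM : forall Z, Z \in F -> exists j, Z \in M j.
  by move=> Z hZ; have /bigcupP [j _ hj] := subsetP hcov Z hZ; exists j.
case: (boolP (S \in B)) => hSB.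
  rewrite (cardsD1 S B) hSB.
  have : #|B :\ S| <= #|[set~ i]|.
    apply: (cover_bound i hM); first exact: antichain_sub (subsetDl _ _) hB.
    move=> Z; rewrite !inE => /andP [hZS hZ].
    have [j hj] := inM Z (inF Z hZ hZS).
    case: (eqVneq j i) => [eji|nji]; last by exists j; rewrite // !inE.
    have hnc : ~~ cmp Z S.
      apply/negP; case/orP => hs.
        by move/eqP: hZS; apply; apply: hB.
      by move/eqP: hZS; apply; symmetry; apply: hB.
    rewrite eji in hj; have [j' hj' hZj'] := hsh Z hj hnc; exists j' => //.
    by rewrite !inE.
  rewrite cardsC1 card_ord add1n => h; have hk : 0 < k by apply: leq_ltn_trans (ltn_ord i).
  by rewrite -(prednK hk) ltnS.
have : #|B| <= #|[set: 'I_k]|.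
  apply: (cover_bound i hM hB) => Z hZ.
  have hZS : Z != S by apply: contraNneq hSB => <-.
  by have [j hj] := inM Z (inF Z hZ hZS); exists j; rewrite ?inE.
by rewrite cardsT card_ord.
Qed.

Lemma interval n (P Q : {set 'I_n}) r :
  P \subset Q -> #|P| <= r -> r <= #|Q| -> exists S : {set 'I_n}, [/\ P \subset S, S \subset Q & #|S| = r].
Proof.
move=> hPQ h1 h2.
have : forall d (P : {set 'I_n}), P \subset Q -> #|P| + d = r ->
    exists S : {set 'I_n}, [/\ P \subset S, S \subset Q & #|S| = r].
  elim => [|d IH] P' hP' hd; first by exists P'; rewrite subxx hP'; split => //; lia.
  case: (set_0Vmem (Q :\: P')) => [h0|[x hx]].
    exfalso; move/eqP: h0; rewrite setD_eq0 => hQP.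
    have := subset_leq_card hQP; lia.
  move: hx; rewrite inE => /andP [hxP hxQ].
  have hs1 : x |: P' \subset Q by rewrite subUset sub1set hxQ hP'.
  have hs2 : #|x |: P'| + d = r by rewrite cardsU1 hxP add1n; lia.
  have [S [h3 h4 h5]] := IH (x |: P') hs1 hs2.
  by exists S; split => //; apply: subset_trans h3; apply: subsetUr.
move=> /(_ (r - #|P|) P hPQ); apply; lia.
Qed.

Lemma force_in n k (F : {set {set 'I_n}}) (M : 'I_k -> {set {set 'I_n}}) :
  induced_saturated (@antichain_le k.+1) F ->
  (forall j, chain (M j)) -> F \subset \bigcup_j M j ->
  forall S i, (forall Z, Z \in M i -> ~~ cmp Z S -> exists2 j, j != i & Z \in M j) ->
  S \in F.
Proof.
move=> hsat hM hcov S i hsh; case: (boolP (S \in F)) => // hS.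
have [B [hB hBa hBc]] := sat_ext hsat hS.
by have := ph hM hcov hsh hB hBa; rewrite hBc ltnn.
Qed.

Lemma full_chains n k (F : {set {set 'I_n}}) : 0 < k ->
  induced_saturated (@antichain_le k.+1) F ->
  exists M : 'I_k -> {set {set 'I_n}}, [/\ (forall j, M j \subset F),
    (forall j, chain (M j)), F \subset \bigcup_j M j &
    (forall j r, r <= n -> exists2 X, X \in M j & #|X| = r)].
Proof.
move=> hk hsat; have hnc := hsat.1.
have hw := sat_width hnc.
have [g [hg1 hg2]] := dilworth (leqnn #|F|) hw.
pose C (j : 'I_k) := [set X in F | g X == j].
pose p (j : 'I_k) (M0 : {set {set 'I_n}}) := [&& C j \subset M0, M0 \subset F & chainb M0].
have pC : forall j, p j (C j).
  move=> j; rewrite /p subxx /=; apply/andP; split.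
    by apply/subsetP => X; rewrite inE => /andP [].
  apply/chainP => X Y; rewrite !inE => /andP [hX /eqP hXj] /andP [hY /eqP hYj].
  by apply: hg2 => //; rewrite hXj hYj.
pose M (j : 'I_k) := [arg max_(M0 > C j | p j M0) #|M0|].
have Mspec : forall j, p j (M j) /\ forall M', p j M' -> #|M'| <= #|M j|.
  by move=> j; rewrite /M; case: arg_maxnP => [|M0 hM0 hmax]; [exact: pC | split].
have CM : forall j, C j \subset M j by move=> j; have [/and3P [] ] := Mspec j.
have MF : forall j, M j \subset F by move=> j; have [/and3P [] ] := Mspec j.
have Mc : forall j, chain (M j) by move=> j; have [/and3P [_ _ /chainP] ] := Mspec j.
have Mcov : F \subset \bigcup_j M j.
  apply/subsetP => X hX; have hlt := hg1 X hX; apply/bigcupP; exists (Ordinal hlt) => //.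
  by apply: (subsetP (CM _)); rewrite inE hX /=.
have Mmax : forall j Z, Z \in F -> (forall X, X \in M j -> cmp Z X) -> Z \in M j.
  move=> j Z hZ hcmpZ; apply/negPn/negP => hZM.
  have : p j (Z |: M j).
    rewrite /p; apply/and3P; split.
    - exact: subset_trans (CM j) (subsetU1 _ _).
    - by rewrite subUset sub1set hZ (MF j).
    - apply/chainP => X Y; rewrite !in_setU1 => /orP [/eqP ->|hX] /orP [/eqP ->|hY].
      + exact: cmp_refl.
      + exact: hcmpZ.
      + by rewrite cmp_sym; apply: hcmpZ.
      + exact: (Mc j X Y hX hY).
  by move/(Mspec j).2; rewrite cardsU1 hZM add1n ltnn.
have force := force_in hsat Mc Mcov.
have hall : forall S, (forall Y : {set 'I_n}, cmp S Y) -> forall j, S \in M j.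
  move=> S hS j; apply: Mmax; last by move=> X _; exact: hS X.
  by apply: (force S j) => Z _; rewrite cmp_sym hS.
exists M; split => // j r hr.
case: (boolP [exists X in M j, #|X| == r]) => [/exists_inP [X hX /eqP hXr]|hno]; first by exists X.
exfalso.
have h0 : set0 \in M j by apply: hall => Y; rewrite /cmp sub0set.
have hT : setT \in M j by apply: hall => Y; rewrite /cmp subsetT orbT.
have hr0 : 0 < r.
  rewrite lt0n; apply: contraNneq hno => hr0; apply/exists_inP; exists set0 => //.
  by rewrite cards0 hr0.
have hrn : r < n.
  rewrite ltn_neqAle hr andbT; apply: contraNneq hno => ->; apply/exists_inP.
  by exists setT => //; rewrite cardsT card_ord.
pose Lo := [set X in M j | #|X| < r].
have h0L : set0 \in Lo by rewrite inE h0 cards0.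
pose P0 := [arg max_(X > set0 in Lo) #|X|].
have [hP0 hP0max] : P0 \in Lo /\ forall X, X \in Lo -> #|X| <= #|P0|.
  by rewrite /P0; case: arg_maxnP => // X hX hmax; split => // Y hY; apply: hmax.
pose Hi := [set X in M j | r < #|X|].
have hTH : setT \in Hi by rewrite inE hT cardsT card_ord hrn.
pose Q0 := [arg min_(X < setT in Hi) #|X|].
have [hQ0 hQ0min] : Q0 \in Hi /\ forall X, X \in Hi -> #|Q0| <= #|X|.
  by rewrite /Q0; case: arg_minnP => // X hX hmin; split => // Y hY; apply: hmin.
move: hP0 hQ0; rewrite !inE => /andP [hP0M hP0r] /andP [hQ0M hQ0r].
have hPQ : P0 \subset Q0 by apply: sub_card_sub; [apply: (Mc j) | lia].
have [S [hPS hSQ hSr]] := interval hPQ (ltnW hP0r) (ltnW hQ0r).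
have hScmp : forall Z, Z \in M j -> cmp Z S.
  move=> Z hZ; case: (ltngtP #|Z| r) => hZr.
  - have hZL : Z \in Lo by rewrite inE hZ hZr.
    have hZP : Z \subset P0 by apply: sub_card_sub; [apply: (Mc j) | apply: hP0max].
    by rewrite /cmp (subset_trans hZP hPS).
  - have hZH : Z \in Hi by rewrite inE hZ hZr.
    have hQZ : Q0 \subset Z by apply: sub_card_sub; [apply: (Mc j) | apply: hQ0min].
    by rewrite /cmp (subset_trans hSQ hQZ) orbT.
  - by case/negP: hno; apply/exists_inP; exists Z => //; rewrite hZr.
have hSM : S \in M j.
  apply: Mmax; last by move=> X hX; rewrite cmp_sym; exact: hScmp.
  by apply: (force S j) => Z hZ; rewrite hScmp.
by case/negP: hno; apply/exists_inP; exists S => //; rewrite hSr.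
Qed.

Lemma cardsU_disj (T : finType) (A B : {set T}) :
  (forall x, x \in A -> x \notin B) -> #|A :|: B| = #|A| + #|B|.
Proof.
move=> H; rewrite cardsU.
have -> : A :&: B = set0.
  apply/setP => x; rewrite !inE; case hA: (x \in A) => //=.
  by rewrite (negbTE (H x hA)).
by rewrite cards0 subn0.
Qed.

Lemma exdiff n (X U : {set 'I_n}) : #|X| < #|U| -> exists2 y, y \in U & y \notin X.
Proof.
move=> h; case: (boolP (U \subset X)) => [hs|/subsetPn [y hy hny]]; last by exists y.
by have := subset_leq_card hs; lia.
Qed.

Lemma cardD_sub n (X U : {set 'I_n}) : X \subset U -> #|U :\: X| = #|U| - #|X|.
Proof. by move=> h; rewrite cardsD (setIidPr h). Qed.

Lemma three n (A : {set {set 'I_n}}) a b c : a \in A -> b \in A -> c \in A ->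
  a != b -> a != c -> b != c -> 3 <= #|A|.
Proof.
move=> ha hb hc hab hac hbc.
have hs : a |: (b |: [set c]) \subset A by rewrite !subUset !sub1set ha hb hc.
apply: leq_trans (subset_leq_card hs).
rewrite !cardsU1 cards1 !inE (negbTE hab) (negbTE hac) (negbTE hbc) //.
Qed.

Lemma level3 n k (F : {set {set 'I_n}}) (M : 'I_k -> {set {set 'I_n}}) r :
  3 <= k -> 3 <= n -> induced_saturated (@antichain_le k.+1) F ->
  (forall j, M j \subset F) -> (forall j, chain (M j)) -> F \subset \bigcup_j M j ->
  (forall j s, s <= n -> exists2 X, X \in M j & #|X| = s) ->
  0 < r -> r < n -> 3 <= #|[set X in F | #|X| == r]|.
Proof.
move=> hk hn hsat hMF hMc hcov hfull hr0 hrn.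
have force := force_in hsat hMc hcov.
pose e j s := odflt set0 [pick X in M j | #|X| == s].
have espec : forall j s, s <= n -> e j s \in M j /\ #|e j s| = s.
  move=> j s hs; rewrite /e; case: pickP => [X /andP [hX /eqP ->] //|hnone].
  have [X hX hXs] := hfull j s hs; have := hnone X; rewrite hX hXs eqxx //.
have elow : forall j s Z, s <= n -> Z \in M j -> #|Z| <= s -> Z \subset e j s.
  move=> j s Z hs hZ hZs; have [h1 h2] := espec j s hs.
  by apply: sub_card_sub; [exact: (hMc j Z _ hZ h1) | rewrite h2].
have ehigh : forall j s Z, s <= n -> Z \in M j -> s <= #|Z| -> e j s \subset Z.
  move=> j s Z hs hZ hZs; have [h1 h2] := espec j s hs.
  by apply: sub_card_sub; [exact: (hMc j _ Z h1 hZ) | rewrite h2].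
have emono : forall j s t, s <= t -> t <= n -> e j s \subset e j t.
  move=> j s t hst htn; have [h1 h2] := espec j s (leq_trans hst htn).
  by apply: elow => //; rewrite h2.
have cardn : forall Z : {set 'I_n}, #|Z| <= n by move=> Z; have := max_card Z; rewrite card_ord.
have eeq : forall j Z, Z \in M j -> Z = e j #|Z|.
  move=> j Z hZ; have [h1 h2] := espec j #|Z| (cardn Z).
  apply/eqP; rewrite eqEcard h2 leqnn andbT; exact: elow.
have force_gen : forall (i j : 'I_k) (lo hi : nat) (S : {set 'I_n}), lo < hi -> hi <= n -> e i lo \subset S ->
    S \subset e i hi -> j != i -> (forall s, lo < s -> s < hi -> e i s \in M j) -> S \in F.
  move=> i j lo hi S hlh hhn hlo hhi hji hsh; apply: (force S i) => Z hZ hnc; exists j => //.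
  case: (leqP #|Z| lo) => h1.
    case/negP: hnc; rewrite /cmp (subset_trans (elow i lo Z (ltnW (leq_trans hlh hhn)) hZ h1) hlo) //.
  case: (leqP hi #|Z|) => h2.
    case/negP: hnc; rewrite /cmp (subset_trans hhi (ehigh i hi Z hhn hZ h2)) orbT //.
  by rewrite (eeq i Z hZ); apply: hsh.
pose L := [set X in F | #|X| == r].
have inL : forall j Z, Z \in M j -> #|Z| = r -> Z \in L.
  by move=> j Z hZ hZr; rewrite inE (subsetP (hMF j) Z hZ) hZr eqxx.
have hrn' : r <= n by apply: ltnW.
have S0gen : forall a b, a != b -> e a r = e b r ->
    let S := e a r.-1 :|: (e a r.+1 :\: e a r) in
    [/\ S \in L, S != e a r & S \subset e a r.+1].
  move=> a b hab hXab S.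
  have hDX : e a r.-1 \subset e a r by apply: emono => //; apply: leq_pred.
  have hXU : e a r \subset e a r.+1 by apply: emono.
  have [hDM hDc] := espec a r.-1 (leq_trans (leq_pred r) hrn').
  have [hXM hXc] := espec a r hrn'.
  have [hUM hUc] := espec a r.+1 hrn.
  have hSU : S \subset e a r.+1 by rewrite subUset subsetDl (subset_trans hDX hXU).
  have hSF : S \in F.
    apply: (force_gen a b r.-1 r.+1) => //.
    - by clear -hr0; lia.
    - exact: subsetUl.
    - by rewrite eq_sym.
    - move=> s h1 h2; have -> : s = r by clear -h1 h2 hr0; lia.
      by rewrite hXab; have [] := espec b r hrn'.
  have hSc : #|S| = r.
    rewrite cardsU_disj; last first.
      by move=> x hx; rewrite inE (subsetP hDX x hx).
    by rewrite cardD_sub // hDc hXc hUc; clear -hr0; lia.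
  have hlt : #|e a r| < #|e a r.+1| by rewrite hXc hUc.
  have [y hyU hyX] := exdiff hlt.
  split => //; first by rewrite inE hSF hSc eqxx.
  apply/eqP => hSX; have : y \in S by rewrite /S !inE hyU hyX orbT.
  by rewrite hSX (negbTE hyX).
have G : forall i j, i != j -> e i r = e j r -> 3 <= #|L|.
  move=> i j hij hXij.
  have [hS0L hS0X hS0U] := S0gen i j hij hXij.
  have hji : j != i by rewrite eq_sym.
  have [hS1L hS1X hS1U] := S0gen j i hji (esym hXij).
  rewrite -hXij in hS1L hS1X hS1U.
  have [hXM hXc] := espec i r hrn'.
  have hXMj : e i r \in M j by rewrite hXij; have [] := espec j r hrn'.
  have hXL : e i r \in L := inL i _ hXM hXc.
  have hDX : e i r.-1 \subset e i r by apply: emono => //; apply: leq_pred.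
  have hXU : e i r \subset e i r.+1 by apply: emono.
  have hD'X : e j r.-1 \subset e i r by rewrite hXij; apply: emono => //; apply: leq_pred.
  have hXU' : e i r \subset e j r.+1 by rewrite hXij; apply: emono.
  have [hDM hDc] := espec i r.-1 (leq_trans (leq_pred r) hrn').
  have [hUM hUc] := espec i r.+1 hrn.
  have [hD'M hD'c] := espec j r.-1 (leq_trans (leq_pred r) hrn').
  have [hU'M hU'c] := espec j r.+1 hrn.
  set X := e i r in hS0L hS0X hS0U hS1L hS1X hS1U hXM hXc hXMj hXL hDX hXU hD'X hXU' *.
  set D := e i r.-1 in hS0L hS0X hS0U hDX hDM hDc *.
  set U := e i r.+1 in hS0L hS0X hS0U hXU hUM hUc *.
  set D' := e j r.-1 in hS1L hS1X hS1U hD'X hD'M hD'c *.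
  set U' := e j r.+1 in hS1L hS1X hS1U hXU' hU'M hU'c *.
  case: (eqVneq (D :|: (U :\: X)) (D' :|: (U' :\: X))) => hS; last first.
    by apply: (three hXL hS0L hS1L); rewrite // eq_sym.
  have capX : forall D0 U0 : {set 'I_n}, D0 \subset X -> (D0 :|: (U0 :\: X)) :&: X = D0.
    move=> D0 U0 h; apply/setP => z; rewrite !inE.
    case: (boolP (z \in D0)) => hz; first by rewrite (subsetP h z hz).
    by case: (z \in X); rewrite ?andbF ?andbT.
  have cupX : forall D0 U0 : {set 'I_n}, D0 \subset X -> X \subset U0 ->
      X :|: ((D0 :|: (U0 :\: X)) :\: X) = U0.
    move=> D0 U0 h1 h2; apply/setP => z; rewrite !inE.
    case: (boolP (z \in X)) => hz /=; first by rewrite (subsetP h2 z hz).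
    case: (boolP (z \in D0)) => hz0 /=; last by [].
    by move: hz; rewrite (subsetP h1 z hz0).
  have hDD : D = D' by rewrite -(capX D U hDX) hS capX.
  have hUU : U = U' by rewrite -(cupX D U hDX hXU) hS cupX.
  have hUr : #|U :\: X| = 1 by rewrite cardD_sub // hUc hXc subSnn.
  have hltUX : #|X| < #|U| by rewrite hUc hXc.
  have [y hyU hyX] := exdiff hltUX.
  case: (leqP 2 r) => hr2.
    pose DD := e i r.-2.
    have [hDDM hDDc] := espec i r.-2 (leq_trans (leq_pred _) (leq_trans (leq_pred r) hrn')).
    have hDDD : DD \subset D by apply: emono; [apply: leq_pred | apply: leq_trans (leq_pred r) hrn'].
    pose S1 := DD :|: (X :\: D) :|: (U :\: X).
    have hS1F : S1 \in F.
      apply: (force_gen i j r.-2 r.+1) => //.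
      - by clear -hr2; lia.
      - by rewrite /S1 -setUA subsetUl.
      - rewrite /S1 !subUset subsetDl (subset_trans (subsetDl X D) hXU) andbT.
        rewrite andbT; exact: subset_trans hDDD (subset_trans hDX hXU).
      - move=> s h1 h2; case: (eqVneq s r) => [->|hsr] //.
        have -> : s = r.-1 by clear -h1 h2 hsr hr2; lia.
        by rewrite -/D hDD.
    have hS1c : #|S1| = r.
      rewrite /S1 cardsU_disj; last first.
        move=> z; rewrite !inE => /orP [hz|/andP [_ hz]]; last by rewrite hz.
        by rewrite (subsetP hDX z (subsetP hDDD z hz)).
      rewrite cardsU_disj; last first.
        by move=> z hz; rewrite inE (subsetP hDDD z hz).
      rewrite cardD_sub // hDDc hDc hXc hUr; clear -hr2; lia.
    have hS1L' : S1 \in L by rewrite inE hS1F hS1c eqxx.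
    have hlt : #|D| < #|X| by rewrite hDc hXc; clear -hr0; lia.
    have [x hxX hxD] := exdiff hlt.
    apply: (three hXL hS0L hS1L').
    - by rewrite eq_sym.
    - apply/eqP => h; have : y \in S1 by rewrite /S1 !inE hyU hyX orbT.
      by rewrite -h (negbTE hyX).
    - apply/eqP => h; have : x \in S1 by rewrite /S1 !inE hxX hxD orbT.
      by rewrite -h !inE (negbTE hxD) hxX.
  have hr1 : r = 1 by clear -hr2 hr0; lia.
  have hr2n : r.+2 <= n by clear -hr1 hn; lia.
  pose UU := e i r.+2.
  have [hUUM hUUc] := espec i r.+2 hr2n.
  have hUUU : U \subset UU by apply: emono.
  pose S1 := D :|: (UU :\: U).
  have hS1F : S1 \in F.
    apply: (force_gen i j r.-1 r.+2) => //.
    - by clear -hr0; lia.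
    - exact: subsetUl.
    - by rewrite /S1 subUset subsetDl (subset_trans hDX (subset_trans hXU hUUU)).
    - move=> s h1 h2; case: (eqVneq s r) => [->|hsr] //.
      have -> : s = r.+1 by clear -h1 h2 hsr hr0; lia.
      by rewrite -/U hUU.
  have hS1c : #|S1| = r.
    rewrite /S1 cardsU_disj; last first.
      by move=> z hz; rewrite inE (subsetP hXU z (subsetP hDX z hz)).
    rewrite cardD_sub // hDc hUc hUUc; clear -hr0; lia.
  have hS1L' : S1 \in L by rewrite inE hS1F hS1c eqxx.
  have hlt : #|U| < #|UU| by rewrite hUc hUUc.
  have [y1 hy1 hy1n] := exdiff hlt.
  apply: (three hXL hS0L hS1L').
  - by rewrite eq_sym.
  - apply/eqP => h; have : y1 \in S1 by rewrite /S1 !inE hy1 hy1n orbT.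
    by rewrite -h => hin; have := subsetP hXU _ hin; rewrite (negbTE hy1n).
  - apply/eqP => h; have : y1 \in S1 by rewrite /S1 !inE hy1 hy1n orbT.
    by rewrite -h => hin; have := subsetP hS0U _ hin; rewrite (negbTE hy1n).
have h0 : 0 < k by clear -hk; lia.
have h1 : 1 < k by clear -hk; lia.
have h2 : 2 < k by clear -hk; lia.
pose i0 := Ordinal h0; pose i1 := Ordinal h1; pose i2 := Ordinal h2.
case: (eqVneq (e i0 r) (e i1 r)) => h01; first by apply: (G i0 i1).
case: (eqVneq (e i0 r) (e i2 r)) => h02; first by apply: (G i0 i2).
case: (eqVneq (e i1 r) (e i2 r)) => h12; first by apply: (G i1 i2).
have [a1 a2] := espec i0 r hrn'; have [b1 b2] := espec i1 r hrn'; have [c1 c2] := espec i2 r hrn'.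
exact: (three (inL _ _ a1 a2) (inL _ _ b1 b2) (inL _ _ c1 c2)).
Qed.

Theorem proposition3p2 (n k : nat) (hk : 3 <= k) (hnk : k < n) :
  isat_ge n (@antichain_le k.+1) (3 * n - 1).
Proof.
move=> F hsat.
have hk0 : 0 < k by clear -hk; lia.
have hn3 : 3 <= n by clear -hk hnk; lia.
have [M [hMF hMc hcov hfull]] := full_chains hk0 hsat.
have hL := fun r => @level3 n k F M r hk hn3 hsat hMF hMc hcov hfull.
pose Mid N := [set X in F | (0 < #|X|) && (#|X| <= N)].
have hMid : forall N, N < n -> 3 * N <= #|Mid N|.
  elim => [|N IH] hN; first by rewrite muln0.
  have -> : Mid N.+1 = Mid N :|: [set X in F | #|X| == N.+1].
    apply/setP => X; rewrite !inE; case: (X \in F) => //=.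
    case: (ltngtP #|X| N.+1) => h /=.
    - by move: h; rewrite ltnS => ->; rewrite andbT orbF.
    - have hc : (#|X| <= N) = false.
        by apply/negbTE; rewrite -ltnNge; exact: ltn_trans (ltnSn N) h.
      by rewrite hc andbF.
    - by rewrite h ltnn andbF orbT.
  rewrite cardsU_disj; last first.
    by move=> X; rewrite !inE => /andP [_ /andP [_ h]]; apply/negP => /andP [_ /eqP h2]; move: h; rewrite h2 ltnn.
  have := IH (ltnW hN); have := hL N.+1 (ltn0Sn N) hN; clear; lia.
have hcard : forall Z : {set 'I_n}, #|Z| <= n by move=> Z; have := max_card Z; rewrite card_ord.
pose i0 := Ordinal hk0.
have [Z0 hZ0 hZ0c] := hfull i0 0 (leq0n n).
have h0F : set0 \in F.
  have : Z0 == set0 by rewrite -cards_eq0 hZ0c.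
  by move/eqP <-; apply: (subsetP (hMF i0)).
have [Zn hZn hZnc] := hfull i0 n (leqnn n).
have hTF : setT \in F.
  have : Zn == setT by rewrite eqEcard subsetT cardsT card_ord hZnc leqnn.
  by move/eqP <-; apply: (subsetP (hMF i0)).
have hsub : set0 |: (setT |: Mid n.-1) \subset F.
  rewrite !subUset !sub1set h0F hTF /=; apply/subsetP => X; rewrite inE => /andP [] //.
have := subset_leq_card hsub.
rewrite !cardsU1 !inE.
have -> : (set0 == [set: 'I_n]) = false.
  apply/negP => /eqP h; have := cardsT 'I_n; rewrite -h cards0 card_ord; clear -hn3; lia.
rewrite cards0 cardsT card_ord ltnn /= andbF.
have hn1 : n.-1 < n by clear -hn3; lia.
have hnn : (n <= n.-1) = false by apply/negbTE; rewrite -ltnNge; exact: hn1.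
rewrite hnn !andbF /= !add1n.
have := hMid n.-1 hn1; move: #|Mid n.-1| #|F| => a b; clear -hn3; lia.
Qed.
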